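(* Let $\mathcal{U}\subset\Delta(\mathcal{X}\times\mathcal{Y})$ be a convex and compact uncertainty set, let $\mathrm{h}^{\mathcal{U}}\in \mathrm{T}(\mathcal{X},\mathcal{Y})$ be an $\ell$-MRC for $\mathcal{U}$, and let $\mathrm{p}^{\mathcal{U}}\in\mathcal{U}$ be a probability distribution with maximum $\ell$-entropy over $\mathcal{U}$. Then $$H_\ell(\mathcal{U})=\ell(\mathrm{h}^{\mathcal{U}},\mathrm{p}^{\mathcal{U}})=\min_{\mathrm{h}\in \mathrm{T}(\mathcal{X},\mathcal{Y})}\max_{\mathrm{p}\in\mathcal{U}}\ell(\mathrm{h},\mathrm{p});$$ that is, $\mathrm{h}^{\mathcal{U}}$ minimizes the expected $\ell$-loss with respect to $\mathrm{p}^{\mathcal{U}}$, $\mathrm{p}^{\mathcal{U}}$ maximizes the expected $\ell$-loss of $\mathrm{h}^{\mathcal{U}}$ over distributions in $\mathcal{U}$, and this expected $\ell$-loss coincides with the maximum $\ell$-entropy over $\mathcal{U}$.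
   Context: Let $\mathcal{X}$ and $\mathcal{Y}$ be finite nonempty sets, with $\mathcal{Y}=\{1,\dots,|\mathcal{Y}|\}$. For a finite set $\mathcal{Z}$, $\Delta(\mathcal{Z})$ denotes the set of probability distributions on $\mathcal{Z}$. A classification rule is a map $\mathrm{h}$ assigning to each $x\in\mathcal{X}$ a distribution $\mathrm{h}(\cdot|x)\in\Delta(\mathcal{Y})$; $\mathrm{T}(\mathcal{X},\mathcal{Y})$ is the set of all classification rules. A score function $L:\Delta(\mathcal{Y})\times\mathcal{Y}\to(-\infty,\infty]$ is lower semi-continuous and convex in its first argument; the associated classification loss is $\ell(\mathrm{h},(x,y))=L(\mathrm{h}(\cdot|x),y)$, and for $\mathrm{p}\in\Delta(\mathcal{X}\times\mathcal{Y})$ the expected loss is $\ell(\mathrm{h},\mathrm{p})=\sum_{x\in\mathcal{X},y\in\mathcal{Y}}\mathrm{p}(x,y)\ell(\mathrm{h},(x,y))$. The $\ell$-entropy of $\mathrm{p}$ is $H_\ell(\mathrm{p})=\min_{\mathrm{h}\in\mathrm{T}(\mathcal{X},\mathcal{Y})}\ell(\mathrm{h},\mathrm{p})$, and for a compact $\mathcal{U}\subset\Delta(\mathcal{X}\times\mathcal{Y})$, $H_\ell(\mathcal{U})=\max_{\mathrm{p}\in\mathcal{U}}H_\ell(\mathrm{p})$. For a convex compact $\mathcal{U}$, a rule $\mathrm{h}^{\mathcal{U}}$ is an $\ell$-MRC (minimax risk classifier) for $\mathcal{U}$ if $\mathrm{h}^{\mathcal{U}}\in\arg\min_{\mathrm{h}\in\mathrm{T}(\mathcal{X},\mathcal{Y})}\max_{\mathrm{p}\in\mathcal{U}}\ell(\mathrm{h},\mathrm{p})$.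 *)

(* Defs.v *)
From HB Require Import structures.
From mathcomp Require Import all_boot all_order all_algebra.
From mathcomp Require Import all_classical all_reals all_analysis.
Set Implicit Arguments. Unset Strict Implicit. Unset Printing Implicit Defensive.
Import Order.TTheory GRing.Theory Num.Theory.
Import numFieldNormedType.Exports.
Local Open Scope classical_set_scope.
Local Open Scope ring_scope.

Section Defs.
Variable R : realType.

Definition Delta (Z : finType) : set (Z -> R) :=
  [set q | (forall z, 0 <= q z) /\ \sum_(z : Z) q z = 1].

Variables X Y : finType.

Definition rules : set (X -> Y -> R) := [set h | forall x, Delta (h x)].

Definition DeltaY_top : set {ptws Y -> R} := @Delta Y.

(* score function L : Delta(Y) x Y -> (-oo, +oo], lsc and convex in its
   first argument (topology of Delta(Y) = subspace of R^Y with the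
   product topology). Values of L outside Delta(Y) are irrelevant. *)
Definition score_function (L : (Y -> R) -> Y -> \bar R) : Prop :=
  [/\ (forall q y, Delta q -> L q y != -oo%E),
      (forall y, lower_semicontinuous
                   (fun q : subspace DeltaY_top => L q y)) &
      (forall y q1 q2 (t : R), Delta q1 -> Delta q2 -> 0 <= t <= 1 ->
         (L (fun z => (t * q1 z + (1 - t) * q2 z)%R) y
          <= t%:E * L q1 y + (1 - t)%R%:E * L q2 y)%E)].

Definition exp_loss (L : (Y -> R) -> Y -> \bar R) (h : X -> Y -> R)
  (p : X * Y -> R) : \bar R :=
  (\sum_(xy : X * Y) (p xy)%:E * L (h xy.1) xy.2)%E.

Definition entropy L (p : X * Y -> R) : \bar R :=
  ereal_inf [set exp_loss L h p | h in rules].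

Definition entropy_set L (U : set (X * Y -> R)) : \bar R :=
  ereal_sup [set entropy L p | p in U].

Definition max_risk L (U : set (X * Y -> R)) (h : X -> Y -> R) : \bar R :=
  ereal_sup [set exp_loss L h p | p in U].

Definition minimax_risk L (U : set (X * Y -> R)) : \bar R :=
  ereal_inf [set max_risk L U h | h in rules].

Definition is_MRC L (U : set (X * Y -> R)) (h : X -> Y -> R) : Prop :=
  rules h /\ forall h', rules h' -> (max_risk L U h <= max_risk L U h')%E.

Definition convex_set (U : set (X * Y -> R)) : Prop :=
  forall p q (t : R), U p -> U q -> 0 <= t <= 1 ->
    U (fun z => t * p z + (1 - t) * q z).

End Defs.
Arguments Delta {R} Z _ : rename.

(* Main.v *)
Require Import Defs.
From HB Require Import structures.
From mathcomp Require Import all_boot all_order all_algebra.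
From mathcomp Require Import all_classical all_reals all_analysis.
From mathcomp Require Import ring lra.
Import Order.TTheory GRing.Theory Num.Theory.
Import numFieldNormedType.Exports.
Local Open Scope classical_set_scope.
Local Open Scope ring_scope.



Section Two.
Variable R : realType.

Lemma seg_real {c' t a1 a2 b1 b2 : R} :
  a1 < c' -> c' <= a2 -> c' <= b1 -> b2 < c' -> 0 < t < 1 ->
  t * a1 + (1 - t) * a2 < c' -> t * b1 + (1 - t) * b2 < c' ->
  exists s, [/\ 0 <= s <= 1, s * a1 + (1 - s) * b1 < c' & s * a2 + (1 - s) * b2 < c'].
Proof.
move=> ha1 ha2 hb1 hb2 /andP[t0 t1] hA hB.
set u := b1 - c'; set v := c' - a1; set w := a2 - c'; set z := c' - b2.
have u0 : 0 <= u by rewrite /u subr_ge0.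
have v0 : 0 < v by rewrite /v subr_gt0.
have w0 : 0 <= w by rewrite /w subr_ge0.
have z0 : 0 < z by rewrite /z subr_gt0.
have P1 : (1 - t) * w < t * v by rewrite /w /v; lra.
have P2 : t * u < (1 - t) * z by rewrite /u /z; lra.
have key : u * w < z * v.
  have : (t * (1 - t)) * (u * w) < (t * (1 - t)) * (z * v).
    have e1 : (t * (1 - t)) * (u * w) = ((1 - t) * w) * (t * u) by ring.
    have e2 : (t * (1 - t)) * (z * v) = (t * v) * ((1 - t) * z) by ring.
    rewrite e1 e2.
    have Q1 : ((1 - t) * w) * (t * u) <= ((1 - t) * w) * ((1 - t) * z).
      apply: ler_wpM2l; first by apply: mulr_ge0 => //; lra.
      exact: ltW.
    have Q2 : ((1 - t) * w) * ((1 - t) * z) < (t * v) * ((1 - t) * z).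
      rewrite ltr_pM2r; [exact: P1 | apply: mulr_gt0 => //; lra].
    exact: le_lt_trans Q1 Q2.
  rewrite ltr_pM2l //; apply: mulr_gt0 => //; lra.
have uv0 : 0 < u + v by lra.
have wz0 : 0 < w + z by lra.
pose s1 := u / (u + v); pose s2 := z / (w + z).
have h1 : s1 * (u + v) = u by rewrite /s1 divfK // gt_eqF.
have h2 : s2 * (w + z) = z by rewrite /s2 divfK // gt_eqF.
have s10 : 0 <= s1 by rewrite /s1 divr_ge0 // ltW.
have s21 : s2 <= 1 by rewrite /s2 ler_pdivrMr // mul1r; lra.
have s12 : s1 < s2.
  have : s1 * ((u + v) * (w + z)) < s2 * ((u + v) * (w + z)).
    rewrite mulrA h1 mulrCA h2. nra.
  by rewrite ltr_pM2r //; apply: mulr_gt0.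
exists ((s1 + s2) / 2); split.
- apply/andP; split; lra.
- have : s1 * (u + v) < ((s1 + s2) / 2) * (u + v) by rewrite ltr_pM2r //; lra.
  rewrite h1 /u /v; lra.
- have : ((s1 + s2) / 2) * (w + z) < s2 * (w + z) by rewrite ltr_pM2r //; lra.
  rewrite h2 /w /z; lra.
Qed.

Lemma open_comb {t r1 r2 c : R} : t * r1 + (1 - t) * r2 < c ->
  exists2 eta, 0 < eta & forall t', `|t' - t| < eta -> t' * r1 + (1 - t') * r2 < c.
Proof.
move=> hc; set D := c - (t * r1 + (1 - t) * r2); set d := `|r1 - r2|.
have D0 : 0 < D by rewrite /D subr_gt0.
have d0 : 0 <= d by rewrite /d normr_ge0.
have d1 : 0 < d + 1 by lra.
exists (D / (d + 1)); first by rewrite divr_gt0.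
move=> t' ht.
have e1 : D / (d + 1) * (d + 1) = D by rewrite divfK // gt_eqF.
have e2 : (t' - t) * (r1 - r2) <= `|t' - t| * d by rewrite /d -normrM ler_norm.
have e3 : `|t' - t| * d <= D / (d + 1) * d by rewrite ler_wpM2r // ltW.
have e4 : D / (d + 1) * d < D / (d + 1) * (d + 1).
  by rewrite ltr_pM2l ?divr_gt0 //; lra.
have e5 : t' * r1 + (1 - t') * r2 = (t * r1 + (1 - t) * r2) + (t' - t) * (r1 - r2) by ring.
have hD : c = D + (t * r1 + (1 - t) * r2) by rewrite /D; ring.
rewrite e5; lra.
Qed.

Lemma near_end (c M e : R) : 0 < e ->
  exists2 d, 0 < d <= 1/2 & forall u, 0 <= u < d -> u * (c - M) < (1 - u) * e.
Proof.
move=> e0; set k := `|c - M| + 1.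
have k0 : 0 < k by rewrite /k; have := normr_ge0 (c - M); lra.
exists (Num.min (1/2) (e / (2 * k))).
  apply/andP; split; last by rewrite ge_min lexx.
  by rewrite lt_min; apply/andP; split; [lra | rewrite divr_gt0 // mulr_gt0].
move=> u /andP[u0]; rewrite lt_min => /andP[u1 u2].
have h1 : u * (c - M) <= u * k.
  by rewrite ler_wpM2l // /k; have := ler_norm (c - M); lra.
have h2 : u * k < e / 2.
  move: u2; rewrite ltr_pdivlMr ?mulr_gt0 // => u2.
  have : u * k * 2 < e by rewrite -mulrA (mulrC k); lra.
  lra.
nra.
Qed.

Local Open Scope ereal_scope.

Lemma comb_ge {t : R} {x y : \bar R} {X Y : R} : (0 <= t <= 1)%R ->
  X%:E <= x -> Y%:E <= y -> ((t * X + (1 - t) * Y)%R)%:E <= t%:E * x + (1-t)%:E * y.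
Proof.
move=> /andP[t0 t1] hx hy; rewrite EFinD !EFinM.
by apply: leeD; apply: lee_wpmul2l => //; rewrite lee_fin ?subr_ge0.
Qed.

Lemma fin_comb {t M c : R} {x y : \bar R} : (0 < t < 1)%R ->
  M%:E <= x -> M%:E <= y -> t%:E * x + (1-t)%:E * y < c%:E ->
  exists r1 r2, x = r1%:E /\ y = r2%:E.
Proof.
move=> /andP[t0 t1]; have t1' : (0 < 1 - t)%R by rewrite subr_gt0.
case: x => [r1| |]; case: y => [r2| |] => h1 h2 h3.
- by exists r1, r2.
all: exfalso.
all: try (move: h1; rewrite leeNy_eq; by []).
all: try (move: h2; rewrite leeNy_eq; by []).
all: move: h3.
all: rewrite ?(gt0_muley (x := t%:E)) ?(gt0_muley (x := (1 - t)%:E)) ?lte_fin //.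
all: rewrite -?EFinM ?addey ?addye //.
all: by rewrite ltNge leey.
Qed.

Lemma two (T : Type) (K : set T) (mix : R -> T -> T -> T) (g1 g2 : T -> \bar R)
  (M c e : R) :
  (forall s a b, (0 <= s <= 1)%R -> K a -> K b -> K (mix s a b)) ->
  (forall s a b, (0 <= s <= 1)%R -> K a -> K b ->
     g1 (mix s a b) <= s%:E * g1 a + (1-s)%:E * g1 b) ->
  (forall s a b, (0 <= s <= 1)%R -> K a -> K b ->
     g2 (mix s a b) <= s%:E * g2 a + (1-s)%:E * g2 b) ->
  (forall a, K a -> M%:E <= g1 a) -> (forall a, K a -> M%:E <= g2 a) ->
  (forall t, (0 < t < 1)%R ->
     exists2 a, K a & t%:E * g1 a + (1-t)%:E * g2 a < c%:E) ->
  (0 < e)%R ->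
  exists2 a, K a & g1 a < (c+e)%:E /\ g2 a < (c+e)%:E.
Proof.
move=> Kmix cv1 cv2 lb1 lb2 hyp e0.
case: (pselect (exists2 a, K a & g1 a < (c+e)%:E /\ g2 a < (c+e)%:E)) => // NQ.
exfalso.
pose A t := exists2 a, K a &
  g1 a < (c+e)%:E /\ t%:E * g1 a + (1-t)%:E * g2 a < c%:E.
pose B t := exists2 a, K a &
  g2 a < (c+e)%:E /\ t%:E * g1 a + (1-t)%:E * g2 a < c%:E.
have cover t : (0 < t < 1)%R -> A t \/ B t.
  move=> t01; have [a Ka ha] := hyp t t01.
  case: (ltP (g1 a) (c+e)%:E) => h1; first by left; exists a.
  case: (ltP (g2 a) (c+e)%:E) => h2; first by right; exists a.
  have t01' : (0 <= t <= 1)%R by move: t01 => /andP[? ?]; apply/andP; split; lra.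
  have := le_lt_trans (comb_ge t01' h1 h2) ha; rewrite lte_fin.
  by move: t01 => /andP[? ?]; lra.
have ABF t : (0 < t < 1)%R -> A t -> B t -> False.
  move=> t01 [a Ka [ha1 hac]] [b Kb [hb2 hbc]].
  have [a1 [a2 [ea1 ea2]]] := fin_comb t01 (lb1 a Ka) (lb2 a Ka) hac.
  have [b1 [b2 [eb1 eb2]]] := fin_comb t01 (lb1 b Kb) (lb2 b Kb) hbc.
  have a2c : (c + e <= a2)%R.
    rewrite -lee_fin -ea2 leNgt; apply/negP => h; apply: NQ; exists a => //.
  have b1c : (c + e <= b1)%R.
    rewrite -lee_fin -eb1 leNgt; apply/negP => h; apply: NQ; exists b => //.
  move: ha1 hac hb2 hbc; rewrite ea1 ea2 eb1 eb2 -!EFinM -!EFinD !lte_fin.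
  move=> ha1 hac hb2 hbc.
  have hce : (c < c + e)%R by lra.
  have [s [s01 hs1 hs2]] := seg_real ha1 a2c b1c hb2 t01
    (lt_trans hac hce) (lt_trans hbc hce).
  apply: NQ; exists (mix s a b); first exact: Kmix.
  split.
  - apply: le_lt_trans (cv1 s a b s01 Ka Kb) _.
    by rewrite ea1 eb1 -!EFinM -EFinD lte_fin.
  - apply: le_lt_trans (cv2 s a b s01 Ka Kb) _.
    by rewrite ea2 eb2 -!EFinM -EFinD lte_fin.
have [d /andP[d0 dh] hd] := near_end c M e e0.
have Anear t : (1 - d < t < 1)%R -> A t.
  move=> /andP[ht1 ht2].
  have t01 : (0 < t < 1)%R by apply/andP; split; lra.
  have [a Ka ha] := hyp t t01.
  case: (ltP (g1 a) (c+e)%:E) => h1; first by exists a.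
  exfalso.
  have t01' : (0 <= t <= 1)%R by apply/andP; split; lra.
  have := le_lt_trans (comb_ge t01' h1 (lb2 a Ka)) ha; rewrite lte_fin.
  have hh : ((1 - t) * (c - M) < (1 - (1 - t)) * e)%R.
    by apply: hd; apply/andP; split; lra.
  move=> hh2; lra.
have Bd : B (d / 2)%R.
  have t01 : (0 < d / 2 < 1)%R by apply/andP; split; lra.
  have [a Ka ha] := hyp _ t01.
  case: (ltP (g2 a) (c+e)%:E) => h2; first by exists a.
  exfalso.
  have t01' : (0 <= d / 2 <= 1)%R by apply/andP; split; lra.
  have := le_lt_trans (comb_ge t01' (lb1 a Ka) h2) ha; rewrite lte_fin.
  have hh : (d / 2 * (c - M) < (1 - d / 2) * e)%R.
    by apply: hd; apply/andP; split; lra.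
  move=> hh2; lra.
pose TB := [set t : R | (0 < t < 1)%R /\ B t].
have TBub : forall t, TB t -> (t <= 1 - d)%R.
  move=> t [t01 Bt]; rewrite leNgt; apply/negP => h.
  apply: (ABF t t01 _ Bt); apply: Anear; apply/andP; split => //.
  by case/andP: t01.
have TBd : TB (d / 2)%R by split => //; apply/andP; split; lra.
have hs : has_sup TB.
  split; first by exists (d / 2)%R.
  by exists (1 - d)%R => t /TBub.
have ts_ge : (d / 2 <= sup TB)%R by apply: sup_upper_bound.
have ts_le : (sup TB <= 1 - d)%R 
  by apply: ge_sup; [exists (d / 2)%R | move=> t /TBub].
have ts01 : (0 < sup TB < 1)%R by apply/andP; split; lra.
case: (cover _ ts01).
- move=> [a Ka [h1 hc]].
  have ts01' := ts01.
  have [r1 [r2 [e1 e2]]] := fin_comb ts01' (lb1 a Ka) (lb2 a Ka) hc.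
  move: hc; rewrite e1 e2 -!EFinM -EFinD lte_fin => hc.
  have [eta eta0 heta] := open_comb hc.
  have [t TBt tlt] := sup_adherent eta0 hs.
  have tle : (t <= sup TB)%R by apply: sup_upper_bound.
  case: TBt => t01 Bt; apply: (ABF t t01 _ Bt).
  exists a => //; split => //.
  rewrite e1 e2 -!EFinM -EFinD lte_fin; apply: heta.
  rewrite ler0_norm; lra.
- move=> [a Ka [h2 hc]].
  have [r1 [r2 [e1 e2]]] := fin_comb ts01 (lb1 a Ka) (lb2 a Ka) hc.
  move: hc; rewrite e1 e2 -!EFinM -EFinD lte_fin => hc.
  have [eta eta0 heta] := open_comb hc.
  pose t' := (sup TB + Num.min eta (1 - sup TB) / 2)%R.
  have m0 : (0 < Num.min eta (1 - sup TB))%R.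
    by rewrite lt_min; apply/andP; split => //; lra.
  have m1 : (Num.min eta (1 - sup TB) <= eta)%R by rewrite ge_min lexx.
  have m2 : (Num.min eta (1 - sup TB) <= 1 - sup TB)%R by rewrite ge_min lexx orbT.
  have TBt' : TB t'.
    split; first by apply/andP; split; rewrite /t'; lra.
    exists a => //; split => //.
    rewrite e1 e2 -!EFinM -EFinD lte_fin; apply: heta.
    rewrite /t' addrAC subrr add0r ger0_norm; lra.
  have := sup_upper_bound hs TBt'; rewrite /t'; lra.
Qed.
End Two.



Section Top.
Variable R : realType.

Lemma sum_cont (Y : finType) (s : seq Y) :
  continuous (fun q : {ptws Y -> R} => \sum_(z <- s) q z).
Proof.
elim: s => [|z s IH] q.
  have -> : (fun q : {ptws Y -> R} => \sum_(z <- [::]) q z) = (fun=> 0).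
    by apply: funext => x; rewrite big_nil.
  exact: cst_continuous.
have -> : (fun q : {ptws Y -> R} => \sum_(z0 <- z :: s) q z0) =
  (fun q : {ptws Y -> R} => q z) + (fun q : {ptws Y -> R} => \sum_(z0 <- s) q z0).
  by apply: funext => x; rewrite big_cons.
have h1 : (fun q0 : {ptws Y -> R} => q0 z) @ q --> q z.
  exact: (@proj_continuous Y (fun _ => R) z q).
have h2 := IH q.
have := cvgD h1 h2.
move=> /(_ (nbhs_filter q)) H; exact: H.
Qed.

Lemma closed_Delta (Y : finType) : closed (@Delta R Y : set {ptws Y -> R}).
Proof.
have -> : (@Delta R Y : set {ptws Y -> R}) =
  (\bigcap_(z in [set: Y]) ((fun q : {ptws Y -> R} => q z) @^-1` [set x | 0 <= x]))
  `&` ((fun q : {ptws Y -> R} => \sum_(z : Y) q z) @^-1` [set 1]).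
  apply/seteqP; split => q.
    by move=> [h0 h1]; split => // z _; exact: h0.
  by move=> [h0 h1]; split => // z; exact: h0.
apply: closedI.
  apply: closed_bigI => z _; apply: preimage_closed; last exact: closed_ge.
  by move=> q _; exact: (@proj_continuous Y (fun _ => R) z q).
apply: preimage_closed; last exact: closed_eq.
by move=> q _; exact: sum_cont.
Qed.

Lemma compact_Delta (Y : finType) : compact (@Delta R Y : set {ptws Y -> R}).
Proof.
have box := @tychonoff Y (fun _ => R) (fun _ => `[0, 1]%classic)
  (fun _ => @segment_compact R 0 1).
apply: (subclosed_compact (closed_Delta Y) box).
move=> q [q0 q1] z /=; rewrite in_itv /= q0 /=.
rewrite -q1 (bigD1 z) //= lerDl; exact: sumr_ge0.
Qed.

End Top.



Section Ext.
Variable R : realType.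
Local Open Scope ereal_scope.

Lemma addNn (x y : \bar R) : x != -oo -> y != -oo -> x + y != -oo.
Proof. by case: x => [x| |]; case: y => [y| |]. Qed.

Lemma mulNn (r : R) (x : \bar R) : (0 <= r)%R -> x != -oo -> r%:E * x != -oo.
Proof.
rewrite le_eqVlt => /orP[/eqP <-|r0]; first by rewrite mul0e.
case: x => [x| |] // _.
by rewrite gt0_muley ?lte_fin.
Qed.

Lemma adde_defN (x y : \bar R) : x != -oo -> y != -oo -> x +? y.
Proof. by case: x => [x| |]; case: y => [y| |]. Qed.

Lemma sumNn (I : Type) (s : seq I) (F : I -> \bar R) :
  (forall i, F i != -oo) -> \sum_(i <- s) F i != -oo.
Proof.
move=> hF; elim: s => [|i s IH]; first by rewrite big_nil.
by rewrite big_cons addNn.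
Qed.
End Ext.

Section App.
Variables (R : realType) (X Y : finType) (L : (Y -> R) -> Y -> \bar R).
Hypothesis hL : score_function L.

Definition mixh (s : R) (h1 h2 : X -> Y -> R) : X -> Y -> R :=
  fun x z => s * h1 x z + (1 - s) * h2 x z.
Definition mixp (t : R) (q p : X * Y -> R) : X * Y -> R :=
  fun z => t * q z + (1 - t) * p z.

Lemma Delta_mix (Z : finType) (s : R) (q1 q2 : Z -> R) : 0 <= s <= 1 ->
  Delta _ q1 -> Delta _ q2 -> Delta _ (fun z => s * q1 z + (1 - s) * q2 z).
Proof.
move=> /andP[s0 s1] [q10 q11] [q20 q21]; split.
  move=> z; apply: addr_ge0; apply: mulr_ge0 => //; lra.
by rewrite big_split /= -!mulr_sumr q11 q21; lra.
Qed.

Lemma rules_mix (s : R) (h1 h2 : X -> Y -> R) : 0 <= s <= 1 -> rules h1 -> rules h2 ->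
  rules (mixh s h1 h2).
Proof. by move=> s01 r1 r2 x; apply: Delta_mix. Qed.

Lemma L_nn (h : X -> Y -> R) (xy : X * Y) : rules h -> L (h xy.1) xy.2 != -oo%E.
Proof. by case: hL => hL1 _ _ hr; apply: hL1. Qed.

Lemma f_nn (h : X -> Y -> R) (p : X * Y -> R) : rules h -> Delta _ p -> exp_loss L h p != -oo%E.
Proof.
move=> hr [p0 _]; apply: sumNn => xy; apply: mulNn => //; exact: L_nn.
Qed.

Lemma conv_f (s : R) (h1 h2 : X -> Y -> R) (p : X * Y -> R) : 0 <= s <= 1 -> rules h1 -> rules h2 -> Delta _ p ->
  (exp_loss L (mixh s h1 h2) p <=
   s%:E * exp_loss L h1 p + (1 - s)%:E * exp_loss L h2 p)%E.
Proof.
move=> s01 r1 r2 [p0 p1]; rewrite /exp_loss.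
have s0 : 0 <= s by case/andP: s01.
have s1 : 0 <= 1 - s by case/andP: s01 => _ ?; lra.
rewrite !fin_num_sume_distrr //; first last.
- by move=> i j _ _; apply: adde_defN; apply: mulNn => //; apply: L_nn.
- by move=> i j _ _; apply: adde_defN; apply: mulNn => //; apply: L_nn.
rewrite -big_split /=; apply: lee_sum => xy _.
case: hL => _ _ hL3.
apply: (@le_trans _ _ ((p xy)%:E * (s%:E * L (h1 xy.1) xy.2 + (1 - s)%:E * L (h2 xy.1) xy.2)))%E.
  apply: lee_wpmul2l; first by rewrite lee_fin.
  exact: hL3.
rewrite muleDr //; last by apply: adde_defN; apply: mulNn => //; apply: L_nn.
by rewrite muleCA (muleCA _ (1 - s)%:E).
Qed.

Lemma lin_f (t : R) (h : X -> Y -> R) (q p : X * Y -> R) : 0 <= t <= 1 -> rules h -> Delta _ q -> Delta _ p ->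
  (t%:E * exp_loss L h q + (1 - t)%:E * exp_loss L h p =
   exp_loss L h (mixp t q p))%E.
Proof.
move=> /andP[t0 t1] hr [q0 _] [p0 _]; rewrite /exp_loss.
have t1' : 0 <= 1 - t by lra.
rewrite !fin_num_sume_distrr //; first last.
- by move=> i j _ _; apply: adde_defN; apply: mulNn => //; apply: L_nn.
- by move=> i j _ _; apply: adde_defN; apply: mulNn => //; apply: L_nn.
rewrite -big_split /=; apply: eq_bigr => xy _.
rewrite /mixp (EFinD (t * q xy)) ge0_muleDl ?lee_fin ?mulr_ge0 //.
by rewrite (EFinM t) (EFinM (1 - t)) !muleA.
Qed.

End App.
Arguments mixh {R X Y}.
Arguments mixp {R X Y}.



Lemma cluster_pt (T : topologicalType) (A : set T) (I : Type) (D : set I)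
  (B : I -> set T) :
  compact A -> (exists i, D i) ->
  (forall i j, D i -> D j -> exists2 k, D k & B k `<=` B i `&` B j) ->
  (forall i, D i -> B i `<=` A) -> (forall i, D i -> B i !=set0) ->
  exists2 x, A x & forall i, D i -> forall W, nbhs x W -> B i `&` W !=set0.
Proof.
move=> cA [i0 Di0] dir sub ne.
have FF : Filter (filter_from D B) by apply: filter_from_filter; first by exists i0.
have PF : ProperFilter (filter_from D B) by apply: filter_from_proper.
have FA : filter_from D B A by exists i0 => //; apply: sub.
have [x [Ax clx]] := cA _ PF FA.
exists x => // i Di W hW; apply: clx => //; by exists i.
Qed.

Section Lsc.
Variable R : realType.
Local Open Scope ereal_scope.

Lemma split_lt (a : R) (x y : \bar R) : x != -oo -> y != -oo -> a%:E < x + y ->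
  exists a1 a2 : R, [/\ a1%:E < x, a2%:E < y & a = (a1 + a2)%R].
Proof.
case: x => [r1| |] //; case: y => [r2| |] // _ _.
- rewrite -EFinD lte_fin => h.
  exists (r1 - (r1 + r2 - a) / 2)%R, (a - (r1 - (r1 + r2 - a) / 2))%R.
  by split; rewrite ?lte_fin; lra.
- move=> _; exists (r1 - 1)%R, (a - (r1 - 1))%R.
  by split; rewrite ?lte_fin ?ltry //; lra.
- move=> _; exists (a - (r2 - 1))%R, (r2 - 1)%R.
  by split; rewrite ?lte_fin ?ltry //; lra.
- move=> _; exists 0%R, a; split; rewrite ?ltry //; lra.
Qed.

Variable (T : topologicalType) (A : set T).

Definition lsc_in (phi : T -> \bar R) (h : T) := forall a : R, a%:E < phi h ->
  exists2 W, nbhs h W & forall h', W h' -> A h' -> a%:E < phi h'.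

Lemma lsc_ext phi psi h : (forall h, phi h = psi h) -> lsc_in psi h -> lsc_in phi h.
Proof.
move=> e hp a; rewrite e => /hp [W hW hW']; exists W => // h' /hW' + /[dup] Ah'.
by rewrite e => /(_ Ah').
Qed.

Lemma lsc_cst k h : lsc_in (fun=> k) h.
Proof. by move=> a ak; exists setT => //; exact: filterT. Qed.

Lemma lsc_add phi1 phi2 h : lsc_in phi1 h -> lsc_in phi2 h ->
  phi1 h != -oo -> phi2 h != -oo -> lsc_in (fun h => phi1 h + phi2 h) h.
Proof.
move=> l1 l2 n1 n2 a ha.
have [a1 [a2 [h1 h2 ->]]] := @split_lt a _ _ n1 n2 ha.
have [W1 hW1 W1p] := l1 _ h1; have [W2 hW2 W2p] := l2 _ h2.
exists (W1 `&` W2); first exact: filterI.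
move=> h' [w1 w2] Ah'; rewrite EFinD; apply: lteD; [exact: W1p | exact: W2p].
Qed.

Lemma lsc_sum (I : Type) (s : seq I) (F : I -> T -> \bar R) h :
  (forall i, lsc_in (F i) h) -> (forall i, F i h != -oo) ->
  lsc_in (fun h => \sum_(i <- s) F i h) h.
Proof.
move=> lF nF; elim: s => [|i s IH].
  by apply: (lsc_ext _ (fun=> 0)) => [h'|]; [rewrite big_nil | exact: lsc_cst].
apply: (lsc_ext _ (fun h => F i h + \sum_(j <- s) F j h)).
  by move=> h'; rewrite big_cons.
apply: lsc_add => //; exact: sumNn.
Qed.

End Lsc.
Arguments lsc_in {R T} A phi h.
Arguments lsc_ext {R T A}.
Arguments lsc_cst {R T A}.
Arguments lsc_add {R T A}.
Arguments lsc_sum {R T A}.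

Section Lf.
Variables (R : realType) (X Y : finType) (L : (Y -> R) -> Y -> \bar R).
Hypothesis hL : score_function L.
Local Notation H := (prod_topology (fun _ : X => prod_topology (fun _ : Y => R))).

Lemma compact_rules : compact (@rules R X Y : set H).
Proof. exact: (@tychonoff X (fun _ => {ptws Y -> R}) _ (fun _ => compact_Delta R Y)). Qed.

Lemma lsc_term (p : X * Y -> R) (xy : X * Y) (h : H) : rules h -> 0 <= p xy ->
  lsc_in (@rules R X Y : set H) (fun h : H => ((p xy)%:E * L (h xy.1) xy.2)%E) h.
Proof.
move=> rh; rewrite le_eqVlt => /orP[/eqP p0|p0].
  apply: (lsc_ext _ (fun=> 0%E)); last exact: lsc_cst.
  by move=> h'; rewrite -p0 mul0e.
move=> a; rewrite -lte_pdivrMl // -EFinM => ha.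
case: hL => _ hL2 _.
have := hL2 xy.2 (h xy.1 : subspace (@DeltaY_top R Y)) _ ha.
move=> [V hV hVp].
have hV' : within (@DeltaY_top R Y) (nbhs (h xy.1 : {ptws Y -> R})) V.
  by rewrite nbhs_subspace_in //; exact: rh.
have hW := @proj_continuous X (fun _ => {ptws Y -> R}) xy.1 h _ hV'.
exists ((proj xy.1) @^-1` [set q | DeltaY_top q -> V q]); first exact: hW.
move=> h' /= hh' rh'.
have := hVp _ (hh' (rh' xy.1)).
by rewrite -lte_pdivrMl // -EFinM.
Qed.
Lemma lsc_f (p : X * Y -> R) (h : H) : rules h -> Delta _ p ->
  lsc_in (@rules R X Y : set H) (fun h : H => exp_loss L h p) h.
Proof.
move=> rh [p0 _]; rewrite /exp_loss.
have := (@lsc_sum R H (@rules R X Y) (X * Y)%type (index_enum _) (fun xy (h : H) => ((p xy)%:E * L (h xy.1) xy.2)%E) h).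
apply.
- move=> xy; exact: (lsc_term p xy h rh (p0 xy)).
- by move=> xy; apply: mulNn => //; apply: (@L_nn R X Y L hL).
Qed.

End Lf.



Section Ebetween.
Variable R : realType.
Local Open Scope ereal_scope.
Lemma ereal_between (u v : \bar R) : u < v -> exists c : R, u < c%:E /\ c%:E < v.
Proof.
case: u => [r1| |]; case: v => [r2| |] //.
- by rewrite lte_fin => h; exists ((r1 + r2) / 2)%R; rewrite !lte_fin; split; lra.
- by move=> _; exists (r1 + 1)%R; rewrite lte_fin ltry; split => //; lra.
- by move=> _; exists (r2 - 1)%R; rewrite lte_fin ltNyr; split => //; lra.
- by move=> _; exists 0%R; rewrite ltry ltNyr.
Qed.

Lemma conv_lt (s M C : R) (x y : \bar R) : (0 <= s <= 1)%R ->
  M%:E <= x -> M%:E <= y -> x < C%:E -> y < C%:E ->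
  s%:E * x + (1 - s)%:E * y < C%:E.
Proof.
move=> /andP[s0 s1].
case: x => [r1| |]; case: y => [r2| |] => h1 h2 h3 h4.
- move: h3 h4; rewrite -!EFinM -EFinD !lte_fin => h3 h4.
  have a1 : (0 <= s * (C - r1))%R by apply: mulr_ge0 => //; lra.
  have a2 : (0 <= (1 - s) * (C - r2))%R by apply: mulr_ge0; lra.
  have a3 : (0 < s * (C - r1) + (1 - s) * (C - r2))%R.
    case: (ltP s 1%R) => hs.
      by apply: ltr_pwDr => //; apply: mulr_gt0; lra.
    have -> : s = 1%R by apply/eqP; rewrite eq_le s1 hs.
    by rewrite mul1r subrr mul0r addr0; lra.
  lra.
all: try (by move: h1; rewrite leeNy_eq).
all: try (by move: h2; rewrite leeNy_eq).
all: try (by move: h3; rewrite ltNge leey).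
all: by move: h4; rewrite ltNge leey.
Qed.
End Ebetween.

Section Main.
Variables (R : realType) (X Y : finType) (L : (Y -> R) -> Y -> \bar R).
Hypothesis hL : score_function L.
Local Notation H := (prod_topology (fun _ : X => prod_topology (fun _ : Y => R))).
Local Notation f := (exp_loss L).

Lemma ex_below (x : \bar R) : x != -oo%E -> exists a : R, (a%:E < x)%E.
Proof.
case: x => [r| |] // _; first by exists (r - 1); rewrite lte_fin; lra.
by exists 0; rewrite ltry.
Qed.

Lemma lower_bound (p : X * Y -> R) : Delta _ p ->
  exists M : R, forall h : X -> Y -> R, rules h -> (M%:E <= f h p)%E.
Proof.
move=> Dp; case: (pselect (exists M : R, forall h : X -> Y -> R,
  rules h -> (M%:E <= f h p)%E)) => // nM; exfalso.
have hB : forall r : R, exists h : H, rules h /\ (f h p < r%:E)%E.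
  move=> r; apply: contrapT => hn; apply: nM; exists r => h rh.
  rewrite leNgt; apply/negP => hlt; apply: hn; by exists h.
have [|||hs rhs cl] := @cluster_pt H (@rules R X Y) R setT
  (fun r => [set h : H | rules h /\ (f h p < r%:E)%E])
  (compact_rules R X Y) (ex_intro _ 0 I).
- move=> i j _ _; exists (Num.min i j) => // h [rh hh]; split; split => //.
  + by apply: (lt_le_trans hh); rewrite lee_fin ge_min lexx.
  + by apply: (lt_le_trans hh); rewrite lee_fin ge_min lexx orbT.
- by move=> i _ h [].
- by move=> i _; have [h hh] := hB i; exists h.
have [a ha] := @ex_below _ (@f_nn R X Y L hL hs p rhs Dp).
have [W hW Wp] := @lsc_f R X Y L hL p hs rhs Dp a ha.
have [h' [[rh' h'a] Wh']] := cl a I W hW.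
by have := Wp h' Wh' rh'; rewrite ltNge (ltW h'a).
Qed.

Lemma compact_concl (U : set (X * Y -> R)) (c : R) :
  U `<=` @Delta R (X * Y)%type ->
  (forall ps : seq (X * Y -> R), (forall p, List.In p ps -> U p) ->
     forall e : R, 0 < e ->
     exists h : X -> Y -> R, rules h /\ forall p, List.In p ps -> (f h p < (c + e)%:E)%E) ->
  exists h : X -> Y -> R, rules h /\ forall p, U p -> (f h p <= c%:E)%E.
Proof.
move=> UD hyp.
have [||||hs rhs cl] := @cluster_pt H (@rules R X Y) (seq (X * Y -> R) * R)%type
  [set i | (forall p, List.In p i.1 -> U p) /\ 0 < i.2]
  (fun i => [set h : H | rules h /\ forall p, List.In p i.1 -> (f h p < (c + i.2)%:E)%E])
  (compact_rules R X Y).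
- by exists ([::], 1); split => //=; lra.
- move=> [s1 e1] [s2 e2] [/= U1 e10] [/= U2 e20].
  exists (s1 ++ s2, Num.min e1 e2).
    split => /=; last by rewrite lt_min e10 e20.
    by move=> p /List.in_app_iff [/U1|/U2].
  move=> h [rh /= hh]; split; split => // p hp.
  + apply: (lt_le_trans (hh p _)); first by apply/List.in_app_iff; left.
    by rewrite lee_fin lerD2l ge_min lexx.
  + apply: (lt_le_trans (hh p _)); first by apply/List.in_app_iff; right.
    by rewrite lee_fin lerD2l ge_min lexx orbT.
- by move=> i _ h [].
- move=> [s e] [/= Us e0]; have [h [rh hh]] := hyp s Us e e0.
  by exists h.
exists hs; split => // p Up.
rewrite leNgt; apply/negP => hlt.
have [a [ca af]] := @ereal_between _ _ _ hlt.
have [W hW Wp] := @lsc_f R X Y L hL p hs rhs (UD p Up) a af.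
have [|h' [[rh' /= h'a] Wh']] := cl ([:: p], a - c) _ W hW.
  by split => /=; [move=> q [<-|] | rewrite subr_gt0 -lte_fin].
have := Wp h' Wh' rh'; have := h'a p (or_introl erefl).
by rewrite addrC subrK => h1 h2; move: (lt_trans h1 h2); rewrite ltxx.
Qed.

Lemma conv_U (U : set (X * Y -> R)) (t : R) (q p : X * Y -> R) :
  convex_set U -> U q -> U p -> 0 <= t <= 1 -> U (mixp t q p).
Proof.
move=> Uc Uq Up /andP[t0 t1].
have := Uc q p (Itv01 t0 t1) (mem_set Uq) (mem_set Up); rewrite inE.
by congr U; apply: funext => z /=.
Qed.

Lemma FL (U : set (X * Y -> R)) (p0 : X * Y -> R) :
  U `<=` @Delta R (X * Y)%type -> convex_set U -> U p0 ->
  forall ps : seq (X * Y -> R), (forall p, List.In p ps -> U p) ->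
  forall (K : set (X -> Y -> R)) (c e : R),
  K `<=` @rules R X Y ->
  (forall s h1 h2, 0 <= s <= 1 -> K h1 -> K h2 -> K (mixh s h1 h2)) ->
  (forall q, U q -> exists h, K h /\ (f h q < c%:E)%E) -> 0 < e ->
  exists h, K h /\ forall p, List.In p ps -> (f h p < (c + e)%:E)%E.
Proof.
move=> UD Uc Up0; elim=> [|p ps IH] Ups K c e KR Kmix HK e0.
  by have [h [Kh _]] := HK p0 Up0; exists h; split.
have Up : U p by apply: Ups; left.
have Ups' : forall p', List.In p' ps -> U p' by move=> p' hp'; apply: Ups; right.
pose K' := [set h | K h /\ (f h p < (c + e / 2)%:E)%E].
have [Mp hMp] := lower_bound p (UD p Up).
have e2 : 0 < e / 2 by lra.
have K'R : K' `<=` @rules R X Y by move=> h [Kh _]; exact: KR.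
have K'mix : forall s h1 h2, 0 <= s <= 1 -> K' h1 -> K' h2 -> K' (mixh s h1 h2).
  move=> s h1 h2 s01 [K1 f1] [K2 f2]; split; first exact: Kmix.
  apply: le_lt_trans (@conv_f R X Y L hL s h1 h2 p s01 (KR _ K1) (KR _ K2) (UD p Up)) _.
  exact: (@conv_lt _ s Mp _ _ _ s01 (hMp _ (KR _ K1)) (hMp _ (KR _ K2)) f1 f2).
have HK' : forall q, U q -> exists h, K' h /\ (f h q < (c + e / 2)%:E)%E.
  move=> q Uq; have [Mq hMq] := lower_bound q (UD q Uq).
  have cv1 : forall s a b, 0 <= s <= 1 -> K a -> K b ->
      (f (mixh s a b) q <= s%:E * f a q + (1 - s)%:E * f b q)%E.
    by move=> s a b s01 Ka Kb; exact: (@conv_f R X Y L hL s a b q s01 (KR _ Ka) (KR _ Kb) (UD q Uq)).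
  have cv2 : forall s a b, 0 <= s <= 1 -> K a -> K b ->
      (f (mixh s a b) p <= s%:E * f a p + (1 - s)%:E * f b p)%E.
    by move=> s a b s01 Ka Kb; exact: (@conv_f R X Y L hL s a b p s01 (KR _ Ka) (KR _ Kb) (UD p Up)).
  have lb1 : forall a, K a -> ((Num.min Mq Mp)%:E <= f a q)%E.
    by move=> a Ka; apply: le_trans (hMq a (KR _ Ka)); rewrite lee_fin ge_min lexx.
  have lb2 : forall a, K a -> ((Num.min Mq Mp)%:E <= f a p)%E.
    by move=> a Ka; apply: le_trans (hMp a (KR _ Ka)); rewrite lee_fin ge_min lexx orbT.
  have hyp : forall t, 0 < t < 1 ->
      exists2 a, K a & (t%:E * f a q + (1 - t)%:E * f a p < c%:E)%E.
    move=> t /andP[t0 t1]; have t01 : 0 <= t <= 1 by apply/andP; split; lra.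
    have Um : U (mixp t q p) by apply: conv_U.
    have [h [Kh hh]] := HK _ Um; exists h => //.
    by rewrite (@lin_f R X Y L hL t h q p t01 (KR _ Kh) (UD q Uq) (UD p Up)).
  have [h Kh [hq hp]] := @two R (X -> Y -> R) K mixh (fun h => f h q) (fun h => f h p)
    (Num.min Mq Mp) c (e / 2) Kmix cv1 cv2 lb1 lb2 hyp e2.
  by exists h; split.
have [h [[Kh hp] hps]] := IH Ups' K' (c + e / 2) (e / 2) K'R K'mix HK' e2.
exists h; split => // p'' [<-|hin].
  by apply: (lt_le_trans hp); rewrite lee_fin; lra.
by have := hps p'' hin; rewrite (_ : c + e / 2 + e / 2 = c + e) //; lra.
Qed.

End Main.

Theorem theorem1 (R : realType) (X Y : finType)
  (L : (Y -> R) -> Y -> \bar R)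
  (U : set (X * Y -> R)) (hU : X -> Y -> R) (pU : X * Y -> R) :
  (0 < #|X|)%N -> (0 < #|Y|)%N ->
  score_function L ->
  U `<=` @Delta R (X * Y)%type ->
  convex_set U -> @compact {ptws X * Y -> R} U ->
  is_MRC L U hU ->
  U pU -> (forall p, U p -> (entropy L p <= entropy L pU)%E) ->
  [/\ entropy_set L U = exp_loss L hU pU,
      exp_loss L hU pU = minimax_risk L U,
      (forall h, rules h -> (exp_loss L hU pU <= exp_loss L h pU)%E) &
      (forall p, U p -> (exp_loss L hU p <= exp_loss L hU pU)%E)].
Proof.
move=> X0 Y0 hL UD Uc Ucomp [rhU MRC] UpU pUmax.
set V := entropy L pU.
have e1 : forall p, U p -> (entropy L p <= exp_loss L hU p)%E.
  by move=> p Up; apply: ereal_inf_lbound; exists hU.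
have e2 : forall p, U p -> (exp_loss L hU p <= max_risk L U hU)%E.
  by move=> p Up; apply: ereal_sup_ubound; exists p.
have KEY : (max_risk L U hU <= V)%E.
  rewrite leNgt; apply/negP => hlt.
  have [c [Vc cM]] := @ereal_between _ _ _ hlt.
  have HK : forall q, U q -> exists h, rules h /\ (exp_loss L h q < c%:E)%E.
    move=> q Uq; have := le_lt_trans (pUmax q Uq) Vc.
    by move=> /ereal_inf_lt [y [h rh <-] hy]; exists h.
  have approx : forall ps : seq (X * Y -> R), (forall p, List.In p ps -> U p) ->
      forall e : R, 0 < e -> exists h : X -> Y -> R,
      rules h /\ forall p, List.In p ps -> (exp_loss L h p < (c + e)%:E)%E.
    move=> ps Ups e e0.
    exact: (@FL R X Y L hL U pU UD Uc UpU ps Ups (@rules R X Y) c e (fun h rh => rh)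
      (fun s h1 h2 s01 r1 r2 => @rules_mix R X Y s h1 h2 s01 r1 r2) HK e0).
  have [hs [rhs hhs]] := @compact_concl R X Y L hL U c UD approx.
  have hc : (max_risk L U hs <= c%:E)%E.
    by apply: ge_ereal_sup => _ [p Up <-]; exact: hhs.
  by have := le_lt_trans (MRC hs rhs) (le_lt_trans hc cM); rewrite ltxx.
have eq1 : exp_loss L hU pU = V.
  apply/eqP; rewrite eq_le; apply/andP; split; last exact: e1.
  exact: le_trans (e2 _ UpU) KEY.
have eq2 : max_risk L U hU = V.
  by apply/eqP; rewrite eq_le KEY -eq1 e2.
have ent : entropy_set L U = V.
  apply/eqP; rewrite eq_le; apply/andP; split.
  - by apply: ge_ereal_sup => _ [p Up <-]; exact: pUmax.
  - by apply: ereal_sup_ubound; exists pU.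
have mm : minimax_risk L U = max_risk L U hU.
  apply/eqP; rewrite eq_le; apply/andP; split.
  - by apply: ereal_inf_lbound; exists hU.
  - by apply: le_ereal_inf_tmp => _ [h rh <-]; exact: MRC.
split.
- by rewrite ent eq1.
- by rewrite mm eq2 eq1.
- by move=> h rh; rewrite eq1; apply: ereal_inf_lbound; exists h.
- by move=> p Up; rewrite eq1 -eq2; exact: e2.
Qed.
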